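(* Let $\mathcal{I}$ be a proper admissible ideal on $\omega$ and let $X$ be a zero-dimensional Lindel\''of space. Then $X$ has the $\mathcal{I}$-Hurewicz property if and only if $X$ has the star-$\mathcal{I}$-Hurewicz property.
   Context: A space is zero-dimensional if it has a base of clopen sets. $St(A,\mathcal{P})=\bigcup\{P\in\mathcal{P}: P\cap A\ne\emptyset\}$. $X$ has the $\mathcal{I}$-Hurewicz property if for each sequence $\langle\mathcal{U}_n\rangle$ of open covers there are finite $\mathcal{V}_n\subseteq\mathcal{U}_n$ with $\{n : x\notin\bigcup\mathcal{V}_n\}\in\mathcal{I}$ for each $x\in X$. $X$ has the star-$\mathcal{I}$-Hurewicz property if for each sequence $\langle\mathcal{U}_n\rangle$ of open covers there are finite $\mathcal{V}_n\subseteq\mathcal{U}_n$ with $\{n : x\notin St(\bigcup\mathcal{V}_n,\mathcal{U}_n)\}\in\mathcal{I}$ for each $x\in X$. *)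

(* Defs.v *)
From HB Require Import structures.
From mathcomp Require Import all_boot all_order all_algebra.
From mathcomp Require Import all_classical topology.
Set Implicit Arguments. Unset Strict Implicit. Unset Printing Implicit Defensive.
Local Open Scope classical_set_scope.

Definition is_ideal (I : set (set nat)) : Prop :=
  I set0 /\
  (forall A B, B `<=` A -> I A -> I B) /\
  (forall A B, I A -> I B -> I (A `|` B)).
Definition proper_ideal (I : set (set nat)) : Prop := ~ I setT.
Definition admissible_ideal (I : set (set nat)) : Prop := forall n : nat, I [set n].

Definition open_cover {X : topologicalType} (U : set (set X)) : Prop :=
  (forall u, U u -> open u) /\ \bigcup_(u in U) u = setT.

Definition clopen_base_zero_dim (X : topologicalType) : Prop :=
  exists B : set (set X),
    (forall b, B b -> open b /\ closed b) /\
    (forall (A : set X) (x : X), open A -> A x -> exists2 b, B b & b x /\ b `<=` A).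

Definition lindelof (X : topologicalType) : Prop :=
  forall U : set (set X), open_cover U ->
    exists2 V : set (set X), V `<=` U /\ countable V & \bigcup_(v in V) v = setT.

Definition star {X : Type} (A : set X) (P : set (set X)) : set X :=
  \bigcup_(p in [set p | P p /\ p `&` A !=set0]) p.

Definition I_Hurewicz (I : set (set nat)) (X : topologicalType) : Prop :=
  forall U : nat -> set (set X), (forall n, open_cover (U n)) ->
    exists V : nat -> set (set X),
      (forall n, V n `<=` U n /\ finite_set (V n)) /\
      (forall x : X, I [set n | ~ (\bigcup_(v in V n) v) x]).

Definition star_I_Hurewicz (I : set (set nat)) (X : topologicalType) : Prop :=
  forall U : nat -> set (set X), (forall n, open_cover (U n)) ->
    exists V : nat -> set (set X),
      (forall n, V n `<=` U n /\ finite_set (V n)) /\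
      (forall x : X, I [set n | ~ star (\bigcup_(v in V n) v) (U n) x]).

(* Main.v *)
Require Import Defs.
From mathcomp Require Import all_boot all_classical topology.
Local Open Scope classical_set_scope.
Lemma partition_refine (X : topologicalType) (U : set (set X)) :
  clopen_base_zero_dim X -> lindelof X -> open_cover U ->
  exists W : set (set X), open_cover W /\
    (forall w1 w2, W w1 -> W w2 -> w1 `&` w2 !=set0 -> w1 = w2) /\
    (forall w, W w -> w !=set0 -> exists2 u, U u & w `<=` u).
Proof.
move=> [B [Bcl Bb]] lin [Uo Ucov].
pose C := [set b | B b /\ exists2 u, U u & b `<=` u].
have Ccov : open_cover C.
  split; first by move=> b [/Bcl []].
  apply/seteqP; split => // x _.
  have : (\bigcup_(u in U) u) x by rewrite Ucov.
  case=> u Uu ux.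
  have [b Bb' [bx bu]] := Bb u x (Uo u Uu) ux.
  by exists b => //; split => //; exists u.
have [D [DC /countable_injP [f finj]] Dcov] := lin C Ccov.
have [e He] : {e : nat -> set X & forall k,
  (exists v, D v /\ f v = k) -> D (e k) /\ f (e k) = k}.
  apply: (@boolp.choice _ _ (fun (k : nat) (v : set X) =>
  (exists v, D v /\ f v = k) -> D v /\ f v = k)).
  move=> k; have [[v Hv]|nH] := EM (exists v, D v /\ f v = k).
    by exists v.
  by exists set0.
pose c k := [set x | (exists v, D v /\ f v = k) /\ e k x].
have cD k : c k = set0 \/ D (c k).
  have [h|nh] := EM (exists v, D v /\ f v = k).
    right; have -> : c k = e k.
      by apply/seteqP; split => x /=; [case|split].
    by case: (He k h).
  by left; apply/seteqP; split => x //= [].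
have ccl k : open (c k) /\ closed (c k).
  case: (cD k) => [->|Dc]; first by split; [exact: open0|exact: closed0].
  by case: (DC _ Dc) => /Bcl.
have cU k : c k !=set0 -> exists2 u, U u & c k `<=` u.
  case: (cD k) => [->[x]//|Dc _].
  by case: (DC _ Dc) => _.
have ccov x : exists k, c k x.
  have : (\bigcup_(v in D) v) x by rewrite Dcov.
  case=> v Dv vx; exists (f v).
  have h : exists v', D v' /\ f v' = f v by exists v.
  case: (He _ h) => De fe.
  have ev : e (f v) = v by apply: finj; rewrite ?inE.
  by split => //; rewrite ev.
pose p k := [set x | c k x /\ forall j, (j < k)%N -> ~ c j x].
have pE k : p k = c k `&` ~` \bigcup_(j in `I_k) c j.
  apply/seteqP; split => x /=.
    by move=> [ck H]; split => // -[j /= jk cj]; exact: (H j jk cj).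
  by move=> [ck H]; split => // j jk cj; apply: H; exists j.
exists (range p); split; [split|split].
- move=> w [k _ <-]; rewrite pE; apply: openI; first by case: (ccl k).
  apply: closed_openC; apply: closed_bigcup; first exact: finite_II.
  by move=> j _; case: (ccl j).
- apply/seteqP; split => // x _.
  have [k ck] := ccov x.
  elim/ltn_ind: k ck => k IH ck.
  have [[j jk cj]|nj] := EM (exists2 j, (j < k)%N & c j x).
    exact: IH cj.
  by exists (p k) => //; split => // j jk cj; apply: nj; exists j.
- move=> w1 w2 [k1 _ <-] [k2 _ <-] [x [[c1 H1] [c2 H2]]].
  have [lt|gt|->] := ltngtP k1 k2; last by [].
  + by case: (H2 _ lt c1).
  + by case: (H1 _ gt c2).
- move=> w [k _ <-] [x [ckx _]].
  have [u Uu cu] := cU k (ex_intro _ x ckx).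
  by exists u => // y [] /cu.
Qed.

Theorem mainTheorem14 (I : set (set nat)) (X : topologicalType) :
  is_ideal I -> proper_ideal I -> admissible_ideal I ->
  clopen_base_zero_dim X -> lindelof X ->
  (I_Hurewicz I X <-> star_I_Hurewicz I X).
Proof.
move=> [_ [Isub _]] _ _ zd lin; split.
  move=> H U Ucov; have [V [HV Hx]] := H U Ucov.
  exists V; split => // x; apply: (Isub _ _ _ (Hx x)) => n /= nst hx.
  apply: nst; case: (hx) => v Vv vx.
  exists v => //; split; first by case: (HV n) => /(_ _ Vv).
  by exists x; split.
move=> H U Ucov.
have [W HW] : {W : nat -> set (set X) & forall n, open_cover (W n) /\
    (forall w1 w2, W n w1 -> W n w2 -> w1 `&` w2 !=set0 -> w1 = w2) /\
    (forall w, W n w -> w !=set0 -> exists2 u, U n u & w `<=` u)}.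
  apply: (@boolp.choice _ _ (fun n W => open_cover W /\
    (forall w1 w2, W w1 -> W w2 -> w1 `&` w2 !=set0 -> w1 = w2) /\
    (forall w, W w -> w !=set0 -> exists2 u, U n u & w `<=` u))).
  by move=> n; apply: partition_refine.
have [V' [HV' Hx]] := H W (fun n => (HW n).1).
have [g Hg] : {g : nat * set X -> set X & forall q,
   (W q.1 q.2 /\ q.2 !=set0) -> U q.1 (g q) /\ q.2 `<=` g q}.
  apply: (@boolp.choice _ _ (fun q u =>
   (W q.1 q.2 /\ q.2 !=set0) -> U q.1 u /\ q.2 `<=` u)).
  move=> [n w]; have [h|nh] := EM (W n w /\ w !=set0).
    by have [u Uu wu] := (HW n).2.2 w h.1 h.2; exists u.
  by exists set0.
exists (fun n => (fun w => g (n, w)) @` [set w | V' n w /\ w !=set0]).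
split.
  move=> n; split.
    move=> u [w [V'w w0] <-].
    have Ww : W n w by case: (HV' n) => /(_ _ V'w).
    by case: (Hg (n, w) (conj Ww w0)).
  apply: finite_image; apply: (sub_finite_set _ (HV' n).2).
  by move=> w [].
move=> x; apply: (Isub _ _ _ (Hx x)) => n /= nst st; apply: nst.
case: st => p [Wp [y [py [v V'v vy]]]] px.
have Wv : W n v by case: (HV' n) => /(_ _ V'v).
have pv : p = v by apply: (HW n).2.1 => //; exists y.
have v0 : v !=set0 by exists y.
exists (g (n, v)); first by exists v.
by case: (Hg (n, v) (conj Wv v0)) => _; apply; rewrite -pv.
Qed.
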